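(* Let $G\in\mathcal{WR}_b(A,B\curvearrowright I)$ with quotient map $\varepsilon\colon G\to B$, section $\varsigma$ and cocycle $\alpha$, and let $C>0$ with $|\mathrm{supp}(\alpha(x,y))|\le C$ for all $x,y\in B$. Let $\pi\colon B\to\mathcal O(\ell^2(I))$ be the orthogonal (permutation) representation induced by $B\curvearrowright I$. Then there is a map $\mathfrak q\colon G\to\ell^2(I)$ such that (1) for all $x,y\in G$, $\sup_{z\in G}\|\mathfrak q(xzy)-\pi_{\varepsilon(x)}(\mathfrak q(z))\|_2<\infty$; and (2) for all $x\in A^{(I)}$, $\|\mathfrak q(x)\|_2^2=|\mathrm{supp}(x)|$.
   Context: $G\in\mathcal{WR}(A,B\curvearrowright I)$ means there is a short exact sequence $1\to A^{(I)}:=\bigoplus_{i\in I}A_i\to G\xrightarrow{\varepsilon}B\to1$ with $A_i\cong A$ and $gA_ig^{-1}=A_{\varepsilon(g)i}$ for all $g\in G,i\in I$. $G\in\mathcal{WR}_b(A,B\curvearrowright I)$ means moreover there is a map $\varsigma\colon B\to G$ with $\varepsilon\circ\varsigma=\mathrm{id}_B$ such that the cocycle $\alpha(x,y)=\varsigma(x)\varsigma(y)\varsigma(xy)^{-1}\in A^{(I)}$ has uniformly bounded support. For $c\in A^{(I)}$, $\mathrm{supp}(c)=\{i\in I: c(i)\neq1\}$. $\ell^2(I)$ is the real Hilbert space of square-summable real functions on $I$. *)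

(* Defs.v *)
From HB Require Import structures.
From mathcomp Require Import all_boot all_order all_algebra monoid.
From mathcomp Require Import all_classical all_reals.
From mathcomp Require Import finmap esum.

Set Implicit Arguments.
Unset Strict Implicit.
Unset Printing Implicit Defensive.

Import Order.TTheory GRing.Theory Num.Theory.
Local Open Scope classical_set_scope.

Section WreathLike.
Variables (A B G : groupType) (I : choiceType).

(* Elements of A^(I) = (+)_{i in I} A_i are represented by functions
   I -> A with finite support. *)
Definition suppA (c : I -> A) : set I := [set i | c i != 1%g].
Definition finsuppA (c : I -> A) : Prop := finite_set (suppA c).

Definition card_supp (c : I -> A) : nat := #|` fset_set (suppA c) |%N.

Definition fmulA (c d : I -> A) : I -> A := fun i => (c i * d i)%g.

Definition Acopy (i : I) : set (I -> A) := [set c | suppA c `<=` [set i]].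

Definition is_action (act : B -> I -> I) : Prop :=
  (forall i, act 1%g i = i) /\
  (forall x y i, act (x * y)%g i = act x (act y i)).

Definition is_group_hom (H K : groupType) (f : H -> K) : Prop :=
  forall x y, f (x * y)%g = (f x * f y)%g.

(* G is in WR(A, B ↷ I): short exact sequence
   1 -> A^(I) --iota--> G --eps--> B -> 1, with
   g A_i g^-1 = A_{eps(g) i}. *)
Definition is_WR (act : B -> I -> I) (eps : G -> B) (iota : (I -> A) -> G)
  : Prop :=
  is_action act /\
  [/\
      (forall c d, finsuppA c -> finsuppA d -> iota (fmulA c d) = (iota c * iota d)%g),
      (forall c d, finsuppA c -> finsuppA d -> iota c = iota d -> c = d),
      is_group_hom eps /\ (forall b, exists g, eps g = b),
      (forall g, eps g = 1%g <-> exists c, finsuppA c /\ iota c = g) &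
      (forall g i,
         [set (g * iota c * g^-1)%g | c in Acopy i]
         = [set iota d | d in Acopy (act (eps g) i)])].

Definition cocycle (sigma : B -> G) (x y : B) : G :=
  (sigma x * sigma y * (sigma (x * y)%g)^-1)%g.

End WreathLike.

Section L2.
Variables (R : realType) (I : choiceType).
Local Open Scope ring_scope.

Definition l2sq (f : I -> R) : \bar R := \esum_(i in [set: I]) ((f i) ^+ 2)%:E.
Definition in_l2 (f : I -> R) : Prop := (l2sq f < +oo)%E.
Definition l2norm (f : I -> R) : R := Num.sqrt (fine (l2sq f)).

Definition perm_rep (B : groupType) (act : B -> I -> I) (b : B) (f : I -> R)
  : I -> R := fun i => f (act (b^-1)%g i).

End L2.

(* Main.v *)
Require Import Defs.
From HB Require Import structures.
From mathcomp Require Import all_boot all_order all_algebra monoid.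
From mathcomp Require Import all_classical all_reals.
From mathcomp Require Import finmap esum.

Import Order.TTheory GRing.Theory Num.Theory.
Local Open Scope classical_set_scope.
Local Open Scope ring_scope.

Section L2p.
Variables (R : realType) (I : choiceType).

Lemma l2sq_fin (f : I -> R) (D : set I) : finite_set D ->
  (forall i, ~ D i -> f i = 0) ->
  l2sq f = (\sum_(i <- fset_set D) f i ^+ 2)%:E.
Proof.
move=> fD f0; rewrite /l2sq.
rewrite (eq_esum (b := fun i => if i \in D then ((f i) ^+ 2)%:E else 0%E)); last first.
  move=> i _; case: ifPn => // /negP niD.
  by rewrite f0 ?expr0n //= => Di; apply: niD; apply/mem_set.
rewrite -esum_mkcond esum_fset //; last by move=> i _; rewrite lee_fin sqr_ge0.
by rewrite fsbig_finite // sumEFin.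
Qed.

Lemma sum1_card (s : {fset I}) : \sum_(i <- s) (1 : R) = (#|` s|)%:R.
Proof. by rewrite card_fset_sum1 natr_sum. Qed.

Lemma l2_bound (f : I -> R) (D : set I) : finite_set D ->
  (forall i, ~ D i -> f i = 0) -> (forall i, f i ^+ 2 <= 1) ->
  in_l2 f /\ l2norm f <= Num.sqrt (#|` fset_set D|)%:R.
Proof.
move=> fD f0 f1; rewrite /in_l2 /l2norm (l2sq_fin _ _ fD f0); split; first by rewrite ltry.
rewrite /= ler_sqrt // -sum1_card; apply: ler_sum => i _; exact: f1.
Qed.

Lemma l2_ind (f : I -> R) (S : set I) : finite_set S ->
  (forall i, f i = if i \in S then 1 else 0) ->
  in_l2 f /\ l2norm f ^+ 2 = (#|` fset_set S|)%:R.
Proof.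
move=> fS hf.
have f0 : forall i, ~ S i -> f i = 0.
  by move=> i niS; rewrite hf; case: ifPn => // /set_mem.
rewrite /in_l2 /l2norm (l2sq_fin _ _ fS f0); split; first by rewrite ltry.
rewrite /= sqr_sqrtr; last by apply: sumr_ge0 => i _; exact: sqr_ge0.
rewrite -sum1_card big_seq [RHS]big_seq; apply: eq_bigr => i.
by rewrite in_fset_set // hf => ->; rewrite expr1n.
Qed.

End L2p.
Section Grp.
Variables (A B G : groupType) (I : choiceType)
  (act : B -> I -> I) (eps : G -> B) (iota : (I -> A) -> G).
Hypothesis HWR : is_WR act eps iota.
Implicit Types (c d : I -> A).
Local Open Scope group_scope.

Definition one_fn : I -> A := fun _ => 1.
Definition inv_fn (c : I -> A) : I -> A := fun i => (c i)^-1.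

Lemma iota_mul c d : finsuppA c -> finsuppA d -> iota (fmulA c d) = iota c * iota d.
Proof. by case: HWR => _ [H _ _ _ _]; apply: H. Qed.
Lemma iota_inj c d : finsuppA c -> finsuppA d -> iota c = iota d -> c = d.
Proof. by case: HWR => _ [_ H _ _ _]; apply: H. Qed.
Lemma eps_mul x y : eps (x * y) = eps x * eps y.
Proof. by case: HWR => _ [_ _ [H _] _ _]; apply: H. Qed.
Lemma eps_ker g : eps g = 1 <-> exists c, finsuppA c /\ iota c = g.
Proof. by case: HWR => _ [_ _ _ H _]; apply: H. Qed.
Lemma conj_set g i : [set (g * iota c * g^-1) | c in Acopy i]
         = [set iota d | d in Acopy (act (eps g) i)].
Proof. by case: HWR => _ [_ _ _ _ H]; apply: H. Qed.
Lemma act1 i : act 1 i = i.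
Proof. by case: HWR => [[H _] _]; apply: H. Qed.
Lemma actM x y i : act (x * y) i = act x (act y i).
Proof. by case: HWR => [[_ H] _]; apply: H. Qed.
Lemma actK x i : act x^-1 (act x i) = i.
Proof. by rewrite -actM mulVg act1. Qed.
Lemma actKV x i : act x (act x^-1 i) = i.
Proof. by rewrite -actM mulgV act1. Qed.

Lemma eps1 : eps 1 = 1.
Proof. by apply: (mulgI (eps 1)); rewrite -eps_mul !mulg1. Qed.
Lemma epsV g : eps g^-1 = (eps g)^-1.
Proof. by apply: (mulgI (eps g)); rewrite -eps_mul !mulgV eps1. Qed.

Lemma finsupp1 : finsuppA one_fn.
Proof. by rewrite /finsuppA /suppA /one_fn (_ : [set _ | _] = set0) ?eqxx //; apply/seteqP; split => i /=; rewrite ?eqxx. Qed.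

Lemma fmul1 : fmulA one_fn one_fn = one_fn.
Proof. by apply: funext => i; rewrite /fmulA /one_fn mulg1. Qed.

Lemma iota1 : iota one_fn = 1.
Proof.
apply: (mulgI (iota one_fn)); rewrite mulg1 -iota_mul ?fmul1 //; exact: finsupp1.
Qed.

Lemma suppA_inv c : suppA (inv_fn c) = suppA c.
Proof. by apply/seteqP; split => i; unfold suppA, inv_fn => /=; rewrite invg_eq1. Qed.

Lemma finsupp_inv c : finsuppA c -> finsuppA (inv_fn c).
Proof. by rewrite /finsuppA suppA_inv. Qed.

Lemma suppA_mul c d : suppA (fmulA c d) `<=` suppA c `|` suppA d.
Proof.
move=> i; unfold suppA, fmulA => /=.
case: (eqVneq (c i) 1) => [->|]; first by rewrite mul1g; right.
by left.
Qed.

Lemma finsupp_mul c d : finsuppA c -> finsuppA d -> finsuppA (fmulA c d).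
Proof. by move=> fc fd; apply: sub_finite_set (suppA_mul c d) _; rewrite finite_setU. Qed.

Lemma iota_inv c : finsuppA c -> iota (inv_fn c) = (iota c)^-1.
Proof.
move=> fc; apply: (mulgI (iota c)); rewrite mulgV -iota_mul //; last exact: finsupp_inv.
by rewrite -iota1; congr iota; apply: funext => i; rewrite /fmulA /inv_fn mulgV.
Qed.


Definition kinv (g : G) : I -> A :=
  match pselect (exists c, finsuppA c /\ iota c = g) with
  | left h => projT1 (cid h) | right _ => one_fn end.

Lemma kinvP g : eps g = 1 -> finsuppA (kinv g) /\ iota (kinv g) = g.
Proof.
move=> /eps_ker h; rewrite /kinv; case: pselect => [h'|//].
by case: (cid h').
Qed.

Lemma kinv_iota c : finsuppA c -> kinv (iota c) = c.
Proof.
move=> fc; have e1 : eps (iota c) = 1 by apply/eps_ker; exists c.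
by have [fk ik] := kinvP _ e1; apply: iota_inj.
Qed.

Lemma finsupp_sub c (S : set I) : finite_set S -> suppA c `<=` S -> finsuppA c.
Proof. by move=> fS sub; apply: sub_finite_set sub fS. Qed.

Lemma conj_supp (g : G) (s : seq I) : forall c, suppA c `<=` [set` s] ->
  exists d, [/\ finsuppA d, iota d = g * iota c * g^-1 &
     forall i, (d i != 1) = (c (act (eps g)^-1 i) != 1)].
Proof.
elim: s => [|j s IH] c sub.
  have -> : c = one_fn.
    apply: funext => i; apply/eqP; apply: contraT => ci.
    by have := sub i ci.
  exists one_fn; split; first exact: finsupp1.
    by rewrite iota1 mulg1 mulgV.
  by move=> i; rewrite /one_fn eqxx.
pose c' := fun i => if i == j then 1 else c i.
pose cj := fun i => if i == j then c j else 1.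
have sub' : suppA c' `<=` [set` s].
  move=> i; rewrite /suppA /c' /=; case: (eqVneq i j) => [_|nij]; first by rewrite eqxx.
  by move=> ci; have := sub i ci; rewrite /= in_cons (negbTE nij).
have fc' : finsuppA c' by apply: finsupp_sub sub' => //; exact: finite_fset.
have subj : suppA cj `<=` [set j].
  by move=> i; rewrite /suppA /cj /=; case: (eqVneq i j) => // _; rewrite eqxx.
have fcj : finsuppA cj by apply: finsupp_sub subj; exact: finite_set1.
have ec : c = fmulA c' cj.
  apply: funext => i; rewrite /fmulA /c' /cj; case: eqP => [->|_].
    by rewrite mul1g.
  by rewrite mulg1.
have [d' [fd' id' pd']] := IH c' sub'.
have : [set (g * iota c * g^-1) | c in Acopy j] (g * iota cj * g^-1).
  by exists cj.
rewrite conj_set => -[dj Adj idj].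
have fdj : finsuppA dj by apply: finsupp_sub Adj; exact: finite_set1.
exists (fmulA d' dj); split; first exact: finsupp_mul.
  rewrite iota_mul // id' idj ec iota_mul //.
  by rewrite !mulgA mulgVK.
move=> i; rewrite /fmulA.
case: (eqVneq (act (eps g)^-1 i) j) => [ei|ni].
  have ii : i = act (eps g) j by rewrite -ei actKV.
  have d'1 : d' i = 1.
    by apply/eqP/negbNE; rewrite pd' /c' ei !eqxx.
  rewrite d'1 mul1g ei.
  case: (eqVneq (c j) 1) => [cj1|cjn].
    have cj1f : cj = one_fn by apply: funext => k; rewrite /cj /one_fn cj1; case: eqP.
    have : iota dj = iota one_fn by rewrite idj cj1f iota1 mulg1 mulgV.
    by move=> /(iota_inj _ _ fdj finsupp1) ->; rewrite /one_fn eqxx.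
  apply/negP => /eqP dji.
  have dj1 : dj = one_fn.
    apply: funext => k; rewrite /one_fn; apply/eqP; apply: contraT => dk.
    have := Adj k dk; rewrite /= => ek; move: dk; by rewrite ek -ii dji eqxx.
  have : iota cj = iota one_fn.
    apply: (mulgI g); apply: (mulIg g^-1).
    by rewrite -idj dj1 iota1 mulg1 mulgV.
  move=> /(iota_inj _ _ fcj finsupp1) cj1.
  by move: cjn; have := congr1 (fun f => f j) cj1; rewrite /cj /one_fn eqxx => ->; rewrite eqxx.
have dj1 : dj i = 1.
  apply/eqP; apply: contraT => dk; have := Adj i dk; rewrite /= => ii.
  by move: ni; rewrite ii actK eqxx.
rewrite dj1 mulg1 pd' /c'.
by rewrite (negbTE ni).
Qed.


Lemma conj_supp' (g : G) c : finsuppA c ->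
  exists d, [/\ finsuppA d, iota d = g * iota c * g^-1 &
     forall i, (d i != 1) = (c (act (eps g)^-1 i) != 1)].
Proof.
move=> fc; apply: (conj_supp g (fset_set (suppA c))) => i ci /=.
by rewrite in_fset_set //; apply/mem_set.
Qed.

Lemma card_supp_mul c d : finsuppA c -> finsuppA d ->
  (card_supp (fmulA c d) <= card_supp c + card_supp d)%N.
Proof.
move=> fc fd; rewrite /card_supp.
have fu : finite_set (suppA c `|` suppA d) by rewrite finite_setU.
have sub : (fset_set (suppA (fmulA c d)) `<=` fset_set (suppA c `|` suppA d))%fset.
  by rewrite -fset_set_sub //; [exact: suppA_mul | exact: finsupp_mul].
apply: (leq_trans (fsubset_leq_card sub)).
by rewrite fset_setU //; exact: (leq_card_fsetU _ _).1.
Qed.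

Lemma card_supp_inv c : card_supp (inv_fn c) = card_supp c.
Proof. by rewrite /card_supp suppA_inv. Qed.

Lemma card_supp_act (b : B) c d : finsuppA c ->
  (forall i, (d i != 1) = (c (act b^-1 i) != 1)) -> card_supp d = card_supp c.
Proof.
move=> fc hd.
have e : suppA d = act b @` suppA c.
  apply/seteqP; split => i.
    rewrite /suppA /= hd => ci; exists (act b^-1 i) => //; exact: actKV.
  by case => k kc <-; rewrite /suppA /= hd actK.
rewrite /card_supp e fset_set_image // card_imfset //.
by move=> x y /(congr1 (act b^-1)); rewrite !actK.
Qed.

Definition Ker (g : G) := eps g = 1.

Lemma Ker_mul g h : Ker g -> Ker h -> Ker (g * h).
Proof. by rewrite /Ker eps_mul => -> ->; rewrite mulg1. Qed.
Lemma Ker_inv g : Ker g -> Ker g^-1.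
Proof. by rewrite /Ker epsV => ->; rewrite invg1. Qed.
Lemma Ker_conj g t : Ker g -> Ker (t * g * t^-1).
Proof. by rewrite /Ker !eps_mul epsV => ->; rewrite mulg1 mulgV. Qed.

Lemma kinv_mul g h : Ker g -> Ker h -> kinv (g * h) = fmulA (kinv g) (kinv h).
Proof.
move=> /kinvP [fg ig] /kinvP [fh ih].
by rewrite -{1}ig -{1}ih -iota_mul // kinv_iota //; exact: finsupp_mul.
Qed.

Lemma kinv_inv g : Ker g -> kinv g^-1 = inv_fn (kinv g).
Proof.
move=> /kinvP [fg ig].
by rewrite -{1}ig -iota_inv // kinv_iota //; exact: finsupp_inv.
Qed.

Lemma kinv_conj g t : Ker g -> forall i,
  (kinv (t * g * t^-1) i != 1) = (kinv g (act (eps t)^-1 i) != 1).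
Proof.
move=> /kinvP [fg ig] i.
have [d [fd id pd]] := conj_supp' t _ fg.
by rewrite -{1}ig -id kinv_iota.
Qed.

Lemma card_kinv_conj g t : Ker g ->
  card_supp (kinv (t * g * t^-1)) = card_supp (kinv g).
Proof.
move=> kg; apply: (card_supp_act (eps t)); first by case: (kinvP _ kg).
exact: kinv_conj.
Qed.

Lemma card_kinv_mul g h : Ker g -> Ker h ->
  (card_supp (kinv (g * h)) <= card_supp (kinv g) + card_supp (kinv h))%N.
Proof.
move=> kg kh; rewrite kinv_mul //; apply: card_supp_mul.
  by case: (kinvP _ kg). by case: (kinvP _ kh).
Qed.

Lemma card_kinv_inv g : Ker g -> card_supp (kinv g^-1) = card_supp (kinv g).
Proof. by move=> kg; rewrite kinv_inv // card_supp_inv. Qed.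

Lemma finsupp_kinv g : finsuppA (kinv g).
Proof.
rewrite /kinv; case: pselect => [h|_]; first by case: (cid h) => ? [].
exact: finsupp1.
Qed.


Lemma memS c i : (i \in suppA c) = (c i != 1).
Proof. by apply/idP/idP => [/set_mem|h]; [|apply/mem_set]. Qed.

Lemma card_union c d : finsuppA c -> finsuppA d ->
  (#|` fset_set (suppA c `|` suppA d)| <= card_supp c + card_supp d)%N.
Proof.
by move=> fc fd; rewrite fset_setU //; exact: (leq_card_fsetU _ _).1.
Qed.

Variables (R : realType) (sigma : B -> G) (C : R).
Hypothesis Hsec : forall b, eps (sigma b) = b.
Hypothesis Hcoc : forall x y : B, exists c : I -> A,
      [/\ finsuppA c, iota c = cocycle sigma x y & ((card_supp c)%:R <= C)%R].

Definition SmR (r : R) g := Ker g /\ ((card_supp (kinv g))%:R <= r)%R.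

Lemma SmR_mul r r' g h : SmR r g -> SmR r' h -> SmR (r + r')%R (g * h).
Proof.
move=> [kg cg] [kh ch]; split; first exact: Ker_mul.
apply: (le_trans _ (lerD cg ch)); rewrite -natrD ler_nat.
exact: card_kinv_mul.
Qed.

Lemma SmR_conj r g t : SmR r g -> SmR r (t * g * t^-1).
Proof. by move=> [kg cg]; split; [exact: Ker_conj | rewrite card_kinv_conj]. Qed.

Lemma SmR_inv r g : SmR r g -> SmR r g^-1.
Proof. by move=> [kg cg]; split; [exact: Ker_inv | rewrite card_kinv_inv]. Qed.

Lemma SmR_coc a b : SmR C (cocycle sigma a b).
Proof.
have [c [fc ic cc]] := Hcoc a b; rewrite -ic; split; last by rewrite kinv_iota.
by apply/eps_ker; exists c.
Qed.

Lemma SmR_self g : Ker g -> SmR (card_supp (kinv g))%:R g.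
Proof. by move=> kg; split. Qed.


Definition s1 := sigma 1.
Definition bg (g : G) := g * (sigma (eps g))^-1 * s1.
Definition qf (g : G) : I -> R := fun i => if kinv (bg g) i != 1 then 1%R else 0%R.

Lemma Ker_s1 : Ker s1.
Proof. by rewrite /Ker /s1 Hsec. Qed.

Lemma Ker_bg g : Ker (bg g).
Proof. by rewrite /Ker /bg !eps_mul epsV !Hsec mulgV mul1g. Qed.

Lemma bg_decomp x z y :
  let u := eps x in let v := eps z in let w := eps y in
  let h := s1^-1 * sigma u in
  let t := h * s1^-1 * sigma v in
  let m := s1^-1 * (sigma u * s1^-1 * (sigma u)^-1)
          * ((sigma u * sigma v) * s1^-1 * (sigma u * sigma v)^-1)
          * (cocycle sigma u v * cocycle sigma (u * v) w) * s1 in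
  bg (x * z * y) = bg x * (h * bg z * h^-1) * (t * bg y * t^-1 * m).
Proof.
move=> u v w h t m.
rewrite /m /t /h /bg /cocycle /u /v /w !eps_mul.
rewrite !invgM !invgK !mulgA.
rewrite ?(mulgK, mulgVK).
rewrite ?(mulgK, mulgVK).
rewrite ?(mulgK, mulgVK).
rewrite ?(mulgK, mulgVK).
rewrite ?(mulgK, mulgVK).
rewrite ?(mulgK, mulgVK).
by [].
Qed.


Lemma bg_decomp' x y : exists K : R, forall z, exists h k,
  [/\ eps h = eps x, SmR K k & bg (x * z * y) = bg x * (h * bg z * h^-1) * k].
Proof.
pose n1 : R := (card_supp (kinv s1))%:R.
pose nby : R := (card_supp (kinv (bg y)))%:R.
exists (nby + ((((n1 + n1) + n1) + (C + C)) + n1))%R => z.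
have := bg_decomp x z y; cbv zeta => E.
eexists; eexists; split; last exact: E.
  by rewrite eps_mul epsV Ker_s1 invg1 mul1g Hsec.
apply: SmR_mul; first exact/SmR_conj/SmR_self/Ker_bg.
apply: SmR_mul; last exact: SmR_self Ker_s1.
apply: SmR_mul; last (apply: SmR_mul; exact: SmR_coc).
apply: SmR_mul; last (apply: SmR_conj; apply: SmR_inv; exact: SmR_self Ker_s1).
apply: SmR_mul; first (apply: SmR_inv; exact: SmR_self Ker_s1).
apply: SmR_conj; apply: SmR_inv; exact: SmR_self Ker_s1.
Qed.


Lemma qf_ind g : in_l2 (qf g) /\
  (l2norm (qf g) ^+ 2)%R = (#|` fset_set (suppA (kinv (bg g)))|)%:R.
Proof.
apply: (@l2_ind R I (qf g) (suppA (kinv (bg g)))); first exact: finsupp_kinv.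
by move=> i; rewrite /qf memS.
Qed.

Lemma main_lemma :
  [/\ (forall g, in_l2 (qf g)),
      (forall x y : G, exists M : R, forall z : G,
          (l2norm (qf (x * z * y) - perm_rep act (eps x) (qf z)) <= M)%R) &
      (forall c : I -> A, finsuppA c ->
          (l2norm (qf (iota c)) ^+ 2)%R = (card_supp c)%:R)].
Proof.
split.
- by move=> g; case: (qf_ind g).
- move=> x y; have [K HK] := bg_decomp' x y.
  exists (Num.sqrt ((card_supp (kinv (bg x)))%:R + K)) => z.
  have [h [k [eh [kk ck] E]]] := HK z.
  have kh : Ker (h * bg z * h^-1) by apply: Ker_conj; exact: Ker_bg.
  have Ek : kinv (bg (x * z * y)) =
      fmulA (fmulA (kinv (bg x)) (kinv (h * bg z * h^-1))) (kinv k).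
    have k1 : Ker (bg x * (h * bg z * h^-1)) by apply: Ker_mul => //; exact: Ker_bg.
    by rewrite E (kinv_mul _ _ k1 kk) (kinv_mul _ _ (Ker_bg x) kh).
  have pb := kinv_conj (bg z) h (Ker_bg z); rewrite eh in pb.
  pose D := suppA (kinv (bg x)) `|` suppA (kinv k).
  have fD : finite_set D by rewrite finite_setU; split; exact: finsupp_kinv.
  pose F := qf (x * z * y) - perm_rep act (eps x) (qf z).
  have f0 : forall i, ~ D i -> F i = 0%R.
    move=> i niD.
    have ka : kinv (bg x) i = 1 by apply/eqP/negbNE/negP => h1; apply: niD; left.
    have kc : kinv k i = 1 by apply/eqP/negbNE/negP => h1; apply: niD; right.
    rewrite /F; change (qf (x * z * y) i - perm_rep act (eps x) (qf z) i = 0%R).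
    rewrite /qf /perm_rep Ek /fmulA ka kc mul1g mulg1 pb.
    by rewrite subrr.
  have f1 : forall i, (F i ^+ 2 <= 1)%R.
    move=> i; rewrite /F; change ((qf (x * z * y) i - perm_rep act (eps x) (qf z) i) ^+ 2 <= 1)%R.
    rewrite /qf /perm_rep.
    by case: ifP; case: ifP => _ _; rewrite ?subrr ?subr0 ?sub0r ?sqrrN ?expr1n ?expr0n.
  have [_ Hb] := @l2_bound R I F D fD f0 f1.
  apply: le_trans Hb _.
  have K0 : (0 <= K)%R by apply: le_trans ck.
  rewrite ler_sqrt; last by apply: addr_ge0.
  apply: (@le_trans _ _ ((card_supp (kinv (bg x)) + card_supp (kinv k))%:R)).
    rewrite ler_nat; apply: card_union; exact: finsupp_kinv.
  by rewrite natrD lerD2l.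
- move=> c fc.
  have kc : eps (iota c) = 1 by apply/eps_ker; exists c.
  have -> : qf (iota c) = fun i => if c i != 1 then 1%R else 0%R.
    by rewrite /qf /bg kc -/s1 mulgVK kinv_iota.
  have hf : forall i, (fun i => if c i != 1 then (1%R : R) else 0%R) i = if i \in suppA c then 1%R else 0%R.
    by move=> i; rewrite memS.
  by have [_ ->] := @l2_ind R I (fun i => if c i != 1 then 1%R else 0%R) (suppA c) fc hf.
Qed.

End Grp.

Local Open Scope ring_scope.

Theorem theorem5p1 (R : realType) (A B G : groupType) (I : choiceType)
    (act : B -> I -> I) (eps : G -> B) (iota : (I -> A) -> G)
    (sigma : B -> G) (C : R) :
  is_WR act eps iota ->
  (forall b, eps (sigma b) = b) ->
  0 < C ->
  (forall x y : B, exists c : I -> A,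
      [/\ finsuppA c, iota c = cocycle sigma x y & (card_supp c)%:R <= C]) ->
  exists q : G -> (I -> R),
    [/\ (forall g, in_l2 (q g)),
        (forall x y : G, exists M : R, forall z : G,
            l2norm (q (x * z * y)%g - perm_rep act (eps x) (q z)) <= M) &
        (forall c : I -> A, finsuppA c ->
            l2norm (q (iota c)) ^+ 2 = (card_supp c)%:R)].
Proof.
move=> HWR Hsec _ Hcoc.
by eexists; exact: (@main_lemma A B G I act eps iota HWR R sigma C Hsec Hcoc).
Qed.
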